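(* Let $N\cong\mathbb{Z}^3$ and let $P$ be a minimal Fano polytope in $N_\mathbb{R}$ which contains two triangles $T_1,T_2$, whose vertices are vertices of $P$, lying in distinct two-dimensional linear subspaces $L_1\ne L_2$, such that each $T_j$ is equivalent (under an isomorphism of lattices $\mathbb{Z}^2\to N\cap L_j$) to $\mathrm{conv}\{(1,0),(0,1),(-2,-1)\}$ (the Fano triangle of $\mathbb{P}(1,1,2)$). Then, up to the action of $GL(3,\mathbb{Z})$, $P$ is the convex hull of the columns of one of $$\begin{pmatrix}1&0&0&-2&-2\\0&1&0&-1&0\\0&0&1&0&-1\end{pmatrix}\quad\text{or}\quad\begin{pmatrix}1&0&-2&1&-3\\0&1&-1&1&-1\\0&0&0&2&-2\end{pmatrix}.$$
   Context: A Fano polytope is a three-dimensional convex polytope $P\subset N_\mathbb{R}$ with vertices in $N$ such that the origin is the only lattice point in the interior of $P$. It is minimal if, for every vertex $\rho$ of $P$, the polytope $\mathrm{conv}((P\cap N)\setminus\{\rho\})$ is not a Fano polytope. Polytopes are identified up to $GL(3,\mathbb{Z})$ (after choosing a basis of $N$). *)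

(* Defs.v *)
(* Lattice N = Z^3 as row vectors 'rV[int]_3; N_Q = 'rV[rat]_3. *)
From mathcomp Require Import all_boot all_order all_algebra.
Set Implicit Arguments. Unset Strict Implicit. Unset Printing Implicit Defensive.
Import Order.TTheory GRing.Theory Num.Theory.
Local Open Scope ring_scope.

Definition lpt := 'rV[int]_3.
Definition qpt := 'rV[rat]_3.

Definition mkpt (a b c : int) : lpt := \row_(i < 3) nth 0 [:: a; b; c] i.

Definition toQ (v : lpt) : qpt := map_mx (intr : int -> rat) v.

Definition conv (A : lpt -> Prop) (x : qpt) : Prop :=
  exists s : seq lpt, (forall v, v \in s -> A v) /\
  exists c : 'I_(size s) -> rat, (forall i, 0 <= c i) /\
    \sum_(i < size s) c i = 1 /\
    x = \sum_(i < size s) c i *: toQ (nth 0 s i).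

Definition interior (A : lpt -> Prop) (x : qpt) : Prop :=
  exists eps : rat, 0 < eps /\
    forall y : qpt, (forall i, `|y ord0 i - x ord0 i| < eps) -> conv A y.

(* conv A is a Fano polytope: the origin is the only lattice point in its
   interior (and it is one, which forces conv A to be three-dimensional). *)
Definition fano (A : lpt -> Prop) : Prop :=
  interior A 0 /\ forall z : lpt, interior A (toQ z) -> z = 0.

Definition polytope (S : seq lpt) : lpt -> Prop := fun v => v \in S.

Definition vertex (S : seq lpt) (v : lpt) : Prop :=
  v \in S /\ ~ conv (fun w => w \in S /\ w != v) (toQ v).

Definition minimal_fano (S : seq lpt) : Prop :=
  fano (polytope S) /\
  forall rho, vertex S rho ->
    ~ fano (fun z => conv (polytope S) (toQ z) /\ z != rho).

Definition in_span2 (e1 e2 : lpt) (x : qpt) : Prop :=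
  exists p q : rat, x = p *: toQ e1 + q *: toQ e2.

Definition lattice_basis2 (e1 e2 : lpt) : Prop :=
  (forall p q : rat, p *: toQ e1 + q *: toQ e2 = 0 -> p = 0 /\ q = 0) /\
  (forall z : lpt, in_span2 e1 e2 (toQ z) ->
     exists m n : int, z = m *: e1 + n *: e2).

(* P contains a triangle with vertices among the vertices of P, lying in the
   plane span(e1,e2), equal to the image of conv{(1,0),(0,1),(-2,-1)} under the
   lattice isomorphism Z^2 -> N ∩ L sending the standard basis to e1, e2. *)
Definition P112_triangle (S : seq lpt) (e1 e2 : lpt) : Prop :=
  lattice_basis2 e1 e2 /\
  vertex S e1 /\ vertex S e2 /\ vertex S (- (2%:Z *: e1) - e2).

(* GL(3,Z) acting on row vectors *)
Definition GL3Z (A : 'M[int]_3) : Prop := \det A = 1 \/ \det A = -1.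

Definition M1 : seq lpt :=
  [:: mkpt 1 0 0; mkpt 0 1 0; mkpt 0 0 1; mkpt (-2) (-1) 0; mkpt (-2) 0 (-1)].
Definition M2 : seq lpt :=
  [:: mkpt 1 0 0; mkpt 0 1 0; mkpt (-2) (-1) 0; mkpt 1 1 2; mkpt (-3) (-1) (-2)].

Definition equiv_to (S : seq lpt) (A : 'M[int]_3) (M : seq lpt) : Prop :=
  forall x : qpt, conv (polytope S) x <->
                  conv (polytope (map (fun v : lpt => v *m A) M)) x.

(* Main.v *)
Require Import Defs.
From mathcomp Require Import all_boot all_order all_algebra.
From mathcomp Require Import zify ring lra.
From Stdlib Require Import Classical.
Set Implicit Arguments. Unset Strict Implicit. Unset Printing Implicit Defensive.
Import Order.TTheory GRing.Theory Num.Theory.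
Local Open Scope ring_scope.

Notation i0 := (@inord 2 0).
Notation i1 := (@inord 2 1).
Notation i2 := (@inord 2 2).

Lemma ordE3 (P : 'I_3 -> Prop) : P i0 -> P i1 -> P i2 -> forall i, P i.
Proof.
move=> h0 h1 h2 [[|[|[|i]]] Hi] //.
- by have -> : Ordinal Hi = i0 by apply: val_inj; rewrite /= inordK.
- by have -> : Ordinal Hi = i1 by apply: val_inj; rewrite /= inordK.
- by have -> : Ordinal Hi = i2 by apply: val_inj; rewrite /= inordK.
Qed.

Lemma rv3_ext (R : Type) (x y : 'rV[R]_3) :
  x ord0 i0 = y ord0 i0 -> x ord0 i1 = y ord0 i1 -> x ord0 i2 = y ord0 i2 -> x = y.
Proof. move=> h0 h1 h2; apply/rowP; apply: ordE3; by rewrite ?mxE. Qed.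

Lemma mkpt0 a b c : mkpt a b c ord0 i0 = a. Proof. by rewrite mxE inordK. Qed.
Lemma mkpt1 a b c : mkpt a b c ord0 i1 = b. Proof. by rewrite mxE inordK. Qed.
Lemma mkpt2 a b c : mkpt a b c ord0 i2 = c. Proof. by rewrite mxE inordK. Qed.

Lemma toQE (v : lpt) i : toQ v ord0 i = (v ord0 i)%:~R. Proof. by rewrite mxE. Qed.
Lemma cZD (a b : lpt) i : (a + b) ord0 i = a ord0 i + b ord0 i. Proof. by rewrite mxE. Qed.
Lemma cZN (a : lpt) i : (- a) ord0 i = - a ord0 i. Proof. by rewrite mxE. Qed.
Lemma cZB (a b : lpt) i : (a - b) ord0 i = a ord0 i - b ord0 i. Proof. by rewrite !mxE. Qed.
Lemma cZZ (c : int) (a : lpt) i : (c *: a) ord0 i = c * a ord0 i. Proof. by rewrite mxE. Qed.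
Lemma cZ0 i : (0 : lpt) ord0 i = 0. Proof. by rewrite mxE. Qed.
Lemma cQD (a b : qpt) i : (a + b) ord0 i = a ord0 i + b ord0 i. Proof. by rewrite mxE. Qed.
Lemma cQN (a : qpt) i : (- a) ord0 i = - a ord0 i. Proof. by rewrite mxE. Qed.
Lemma cQB (a b : qpt) i : (a - b) ord0 i = a ord0 i - b ord0 i. Proof. by rewrite !mxE. Qed.
Lemma cQZ (c : rat) (a : qpt) i : (c *: a) ord0 i = c * a ord0 i. Proof. by rewrite mxE. Qed.
Lemma cQ0 i : (0 : qpt) ord0 i = 0. Proof. by rewrite mxE. Qed.
Definition cE := (cZD, cZN, cZZ, cZ0, cQD, cQN, cQZ, cQ0, toQE).

Definition dZ (a b c : lpt) : int :=
  a ord0 i0 * (b ord0 i1 * c ord0 i2 - b ord0 i2 * c ord0 i1)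
 - a ord0 i1 * (b ord0 i0 * c ord0 i2 - b ord0 i2 * c ord0 i0)
 + a ord0 i2 * (b ord0 i0 * c ord0 i1 - b ord0 i1 * c ord0 i0).
Definition dQ (a b c : qpt) : rat :=
  a ord0 i0 * (b ord0 i1 * c ord0 i2 - b ord0 i2 * c ord0 i1)
 - a ord0 i1 * (b ord0 i0 * c ord0 i2 - b ord0 i2 * c ord0 i0)
 + a ord0 i2 * (b ord0 i0 * c ord0 i1 - b ord0 i1 * c ord0 i0).

Lemma dQ_toQ a b c : dQ (toQ a) (toQ b) (toQ c) = (dZ a b c)%:~R.
Proof. rewrite /dQ /dZ !toQE; ring. Qed.

Lemma cramerZ (v w x z : lpt) :
  dZ v w x *: z = dZ z w x *: v + dZ v z x *: w + dZ v w z *: x.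
Proof. apply: rv3_ext; rewrite !cE /dZ; ring. Qed.

Lemma cramerQ (v w x z : qpt) :
  dQ v w x *: z = dQ z w x *: v + dQ v z x *: w + dQ v w z *: x.
Proof. apply: rv3_ext; rewrite !cE /dQ; ring. Qed.

Lemma toQD a b : toQ (a + b) = toQ a + toQ b.
Proof. apply: rv3_ext; by rewrite !cE rmorphD. Qed.
Lemma toQN a : toQ (- a) = - toQ a.
Proof. apply: rv3_ext; by rewrite !cE rmorphN. Qed.
Lemma toQB a b : toQ (a - b) = toQ a - toQ b.
Proof. by rewrite toQD toQN. Qed.
Lemma toQZ (c : int) a : toQ (c *: a) = c%:~R *: toQ a.
Proof. apply: rv3_ext; by rewrite !cE rmorphM. Qed.
Lemma toQ0 : toQ 0 = 0.
Proof. apply: rv3_ext; by rewrite !cE. Qed.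
Lemma toQ_inj a b : toQ a = toQ b -> a = b.
Proof.
move=> h; apply/rowP => i; have := congr1 (fun x : qpt => x ord0 i) h.
by rewrite !mxE => /intr_inj.
Qed.

Lemma dZ_lin1 (p q : int) a b c d :
  dZ (p *: a + q *: b) c d = p * dZ a c d + q * dZ b c d.
Proof. rewrite /dZ !cE; ring. Qed.
Lemma dZ_perm1 a b c : dZ b a c = - dZ a b c.
Proof. rewrite /dZ; ring. Qed.
Lemma dZ_perm2 a b c : dZ a c b = - dZ a b c.
Proof. rewrite /dZ; ring. Qed.
Lemma dZ_rot a b c : dZ b c a = dZ a b c.
Proof. rewrite /dZ; ring. Qed.
Lemma dZ_lin3 (p q : int) a b c d :
  dZ c d (p *: a + q *: b) = p * dZ c d a + q * dZ c d b.
Proof. rewrite /dZ !cE; ring. Qed.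
Lemma dZ_same a b : dZ a b a = 0. Proof. rewrite /dZ; ring. Qed.
Lemma dZ_same2 a b : dZ a b b = 0. Proof. rewrite /dZ; ring. Qed.
Lemma dZ_same3 a b : dZ a a b = 0. Proof. rewrite /dZ; ring. Qed.

Fixpoint allPr (T : Type) (P : T -> Prop) (l : seq T) : Prop :=
  if l is x :: l' then P x /\ allPr P l' else True.

Lemma allP_in (T : eqType) (P : T -> Prop) l : allPr P l <-> (forall x, x \in l -> P x).
Proof.
elim: l => [|y l IH] /=; first by split=> // _ x.
split.
- move=> [hy /IH hl] x; rewrite inE => /orP [/eqP -> //|]; exact: hl.
- move=> h; split; first by apply: h; rewrite inE eqxx.
  by apply/IH => x hx; apply: h; rewrite inE hx orbT.
Qed.

Lemma allP_impl T (P Q : T -> Prop) l : (forall x, P x -> Q x) -> allPr P l -> allPr Q l.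
Proof. move=> h; elim: l => //= x l IH [hx hl]; split; [exact: h|exact: IH]. Qed.

Lemma allP_cat T (P : T -> Prop) l1 l2 : allPr P l1 -> allPr P l2 -> allPr P (l1 ++ l2).
Proof. by elim: l1 => //= x l IH [hx hl] h2; split => //; apply: IH. Qed.

Lemma allP_map T U (f : T -> U) (P : U -> Prop) l : allPr (fun x => P (f x)) l -> allPr P (map f l).
Proof. by elim: l => //= x l IH [hx hl]; split => //; apply: IH. Qed.

Definition convQ (B : qpt -> Prop) (x : qpt) : Prop :=
  exists l : seq (rat * qpt), allPr (fun p => 0 <= p.1 /\ B p.2) l /\
    \sum_(p <- l) p.1 = 1 /\ x = \sum_(p <- l) p.1 *: p.2.

Definition imgQ (A : lpt -> Prop) (q : qpt) : Prop := exists v, A v /\ q = toQ v.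

Definition convL (A : lpt -> Prop) (x : qpt) : Prop :=
  exists l : seq (rat * lpt), allPr (fun p => 0 <= p.1 /\ A p.2) l /\
    \sum_(p <- l) p.1 = 1 /\ x = \sum_(p <- l) p.1 *: toQ p.2.

Lemma conv_convL A x : conv A x <-> convL A x.
Proof.
split.
- move=> [s [hs [c [hc [h1 hx]]]]].
  exists [seq (c i, nth 0 s i) | i <- enum 'I_(size s)].
  split; [|split].
  + apply/allP_in => p /mapP [i _ ->] /=; split => //.
    apply: hs; exact: mem_nth.
  + by rewrite big_map big_enum /=.
  + by rewrite big_map big_enum /=.
- move=> [l [hl [h1 hx]]].
  have hl' := (iffLR (allP_in _ _) hl).
  exists [seq p.2 | p <- l]; split.
    by move=> v /mapP [p hp ->]; have [] := hl' _ hp.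
  rewrite size_map.
  exists (fun i : 'I_(size l) => (nth (0,0) l i).1); split; [|split].
  + by move=> i; have [] := hl' _ (mem_nth (0,0) (ltn_ord i)).
  + by rewrite -h1 [in RHS](big_nth (0,0)) big_mkord.
  + rewrite hx (big_nth (0,0)) big_mkord; apply: eq_bigr => i _.
    by rewrite (nth_map (0,0)).
Qed.

Lemma convL_convQ A x : convL A x <-> convQ (imgQ A) x.
Proof.
split.
- move=> [l [hl [h1 hx]]]; exists [seq (p.1, toQ p.2) | p <- l].
  split; [|split].
  + apply: allP_map; apply: allP_impl hl => p [hp1 hp2] /=; split => //; by exists p.2.
  + by rewrite big_map.
  + by rewrite big_map.
- move=> [l [hl [h1 hx]]].
  have [l' [hl' [e1 e2]]] : exists l' : seq (rat * lpt),
      allPr (fun p => 0 <= p.1 /\ A p.2) l' /\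
      \sum_(p <- l') p.1 = \sum_(p <- l) p.1 /\
      \sum_(p <- l') p.1 *: toQ p.2 = \sum_(p <- l) p.1 *: p.2.
    elim: l hl {h1 hx} => [|[w q] l IH] /=.
      by move=> _; exists [::]; rewrite !big_nil.
    move=> [[hw [v [hv ->]]] /IH [l' [hl' [e1 e2]]]].
    exists ((w, v) :: l'); rewrite !big_cons /= e1 e2; split => //.
  by exists l'; rewrite e1 e2.
Qed.

Lemma conv_convQ A x : conv A x <-> convQ (imgQ A) x.
Proof. by rewrite conv_convL convL_convQ. Qed.

Lemma convQ_flat (B : qpt -> Prop) (l : seq (rat * qpt)) :
  allPr (fun p => 0 <= p.1 /\ convQ B p.2) l ->
  exists l' : seq (rat * qpt), allPr (fun p => 0 <= p.1 /\ B p.2) l' /\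
      \sum_(p <- l') p.1 = \sum_(p <- l) p.1 /\
      \sum_(p <- l') p.1 *: p.2 = \sum_(p <- l) p.1 *: p.2.
Proof.
elim: l => [|[w q] l IH] /=; first by move=> _; exists [::]; rewrite !big_nil.
move=> [[hw [lq [hlq [hq1 hq]]]] /IH [l' [hl' [e1 e2]]]].
exists ([seq (w * p.1, p.2) | p <- lq] ++ l'); split; [|split].
- apply: allP_cat => //; apply: allP_map; apply: allP_impl hlq => p [h1 h2] /=.
  by split => //; apply: mulr_ge0.
- by rewrite big_cat big_map big_cons /= e1 -mulr_sumr hq1 mulr1.
- rewrite big_cat big_map big_cons /= e2 hq scaler_sumr; congr (_ + _).
  by apply: eq_bigr => p _; rewrite scalerA.
Qed.

Lemma convQ_idem B x : convQ (convQ B) x -> convQ B x.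
Proof.
move=> [l [hl [h1 hx]]]; have [l' [hl' [e1 e2]]] := convQ_flat hl.
by exists l'; rewrite e1 e2.
Qed.

Lemma convQ_mono (B C : qpt -> Prop) x : (forall q, B q -> C q) -> convQ B x -> convQ C x.
Proof.
move=> h [l [hl [h1 hx]]]; exists l; split => //.
by apply: allP_impl hl => p [? ?]; split => //; apply: h.
Qed.

Lemma convQ_pt (B : qpt -> Prop) q : B q -> convQ B q.
Proof. move=> hq; exists [:: (1, q)]; rewrite !big_cons !big_nil /= !addr0 scale1r.
by split; [split; [split; [exact: ler01|exact: hq]|]|]. Qed.

Lemma conv_comb A (l : seq (rat * qpt)) :
  allPr (fun p => 0 <= p.1 /\ conv A p.2) l -> \sum_(p <- l) p.1 = 1 ->
  conv A (\sum_(p <- l) p.1 *: p.2).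
Proof.
move=> hl h1; apply/conv_convQ; apply: convQ_idem; exists l; split => //.
by apply: allP_impl hl => p [? /conv_convQ ?].
Qed.

Lemma conv_pt (A : lpt -> Prop) v : A v -> conv A (toQ v).
Proof. by move=> hv; apply/conv_convQ; apply: convQ_pt; exists v. Qed.

Lemma conv_conv (A B : lpt -> Prop) x : (forall v, A v -> conv B (toQ v)) -> conv A x -> conv B x.
Proof.
move=> h /conv_convQ hx; apply/conv_convQ; apply: convQ_idem.
by apply: convQ_mono hx => q [v [hv ->]]; apply/conv_convQ; apply: h.
Qed.

Lemma conv_mono (A B : lpt -> Prop) x : (forall v, A v -> B v) -> conv A x -> conv B x.
Proof. by move=> h; apply: conv_conv => v hv; apply: conv_pt; apply: h. Qed.

Definition qmk (a b c : rat) : qpt := \row_(i < 3) nth 0 [:: a; b; c] i.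
Lemma qmk0 a b c : qmk a b c ord0 i0 = a. Proof. by rewrite mxE inordK. Qed.
Lemma qmk1 a b c : qmk a b c ord0 i1 = b. Proof. by rewrite mxE inordK. Qed.
Lemma qmk2 a b c : qmk a b c ord0 i2 = c. Proof. by rewrite mxE inordK. Qed.
Definition qmkE := (qmk0, qmk1, qmk2).

Lemma conv_two A (p q : qpt) (a : rat) : 0 <= a <= 1 -> conv A p -> conv A q ->
  conv A (a *: p + (1 - a) *: q).
Proof.
move=> /andP [ha0 ha1] hp hq.
have := @conv_comb A [:: (a, p); (1 - a, q)].
rewrite !big_cons !big_nil /= !addr0; apply; last by ring.
split; first by split.
by split => //; split => //; rewrite subr_ge0.
Qed.

Lemma absorb_interior A : conv A 0 ->
  (forall d : qpt, exists t : rat, 0 < t /\ conv A (t *: d)) -> interior A 0.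
Proof.
move=> h0 hd.
have hm : forall d : qpt, exists t : rat, 0 < t /\ forall m : rat, 0 < m <= t -> conv A (m *: d).
  move=> d; have [t [ht hc]] := hd d; exists t; split => // m /andP [hm0 hmt].
  have -> : m *: d = (m / t) *: (t *: d) + (1 - m / t) *: 0.
    by rewrite scaler0 addr0 scalerA mulfVK // gt_eqF.
  apply: conv_two => //; apply/andP; split.
    by apply: divr_ge0; apply: ltW.
  by rewrite ler_pdivrMr // mul1r.
have [t1 [t1p h1]] := hm (qmk 1 0 0).
have [t2 [t2p h2]] := hm (qmk (-1) 0 0).
have [t3 [t3p h3]] := hm (qmk 0 1 0).
have [t4 [t4p h4]] := hm (qmk 0 (-1) 0).
have [t5 [t5p h5]] := hm (qmk 0 0 1).
have [t6 [t6p h6]] := hm (qmk 0 0 (-1)).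
pose m := Num.min t1 (Num.min t2 (Num.min t3 (Num.min t4 (Num.min t5 t6)))).
have mp : 0 < m by rewrite /m !lt_min t1p t2p t3p t4p t5p t6p.
have m1 : m <= t1 by rewrite /m ge_min lexx.
have m2 : m <= t2 by rewrite /m !ge_min lexx !orbT.
have m3 : m <= t3 by rewrite /m !ge_min lexx !orbT.
have m4 : m <= t4 by rewrite /m !ge_min lexx !orbT.
have m5 : m <= t5 by rewrite /m !ge_min lexx !orbT.
have m6 : m <= t6 by rewrite /m !ge_min lexx !orbT.
exists (m / 3); split; first by apply: divr_gt0.
move=> y hy.
have hy0 := hy i0; have hy1 := hy i1; have hy2 := hy i2.
rewrite !cQ0 !subr0 in hy0 hy1 hy2.
set y0 := y ord0 i0 in hy0 *; set y1 := y ord0 i1 in hy1 *; set y2 := y ord0 i2 in hy2 *.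
have n0 := ler_norm y0; have /andP [n0' _] : - `|y0| <= y0 <= `|y0| by rewrite -ler_norml.
have n1 := ler_norm y1; have /andP [n1' _] : - `|y1| <= y1 <= `|y1| by rewrite -ler_norml.
have n2 := ler_norm y2; have /andP [n2' _] : - `|y2| <= y2 <= `|y2| by rewrite -ler_norml.
pose p0 := (y0 + `|y0|) / 2 / m; pose q0 := (`|y0| - y0) / 2 / m.
pose p1 := (y1 + `|y1|) / 2 / m; pose q1 := (`|y1| - y1) / 2 / m.
pose p2 := (y2 + `|y2|) / 2 / m; pose q2 := (`|y2| - y2) / 2 / m.
have mn0 : m != 0 by rewrite gt_eqF.
have -> : y = \sum_(p <- [:: (p0, m *: qmk 1 0 0); (q0, m *: qmk (-1) 0 0);
      (p1, m *: qmk 0 1 0); (q1, m *: qmk 0 (-1) 0); (p2, m *: qmk 0 0 1);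
      (q2, m *: qmk 0 0 (-1)); (1 - (p0+q0+p1+q1+p2+q2), 0)]) p.1 *: p.2.
  rewrite !big_cons !big_nil /=; apply: rv3_ext; rewrite !cE !qmkE /p0 /q0 /p1 /q1 /p2 /q2;
  rewrite -/y0 -/y1 -/y2; field; exact: mn0.
have hle : forall a : rat, 0 <= a -> 0 <= a / 2 / m.
  by move=> a ha; apply: divr_ge0 => //; [apply: divr_ge0| apply: ltW].
apply: conv_comb; last by rewrite !big_cons !big_nil /=; ring.
rewrite /=; do !split; try (unfold p0, q0, p1, q1, p2, q2; apply: hle; lra).
- by apply: h1; rewrite mp m1.
- by apply: h2; rewrite mp m2.
- by apply: h3; rewrite mp m3.
- by apply: h4; rewrite mp m4.
- by apply: h5; rewrite mp m5.
- by apply: h6; rewrite mp m6.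
- have e : p0+q0+p1+q1+p2+q2 = (`|y0| + `|y1| + `|y2|) / m.
    by rewrite /p0 /q0 /p1 /q1 /p2 /q2; field.
  rewrite e subr_ge0 ler_pdivrMr // mul1r.
  have : m / 3 * 3 = m by rewrite mulfVK.
  move: hy0 hy1 hy2; set M := m / 3; lra.
- exact: h0.
Qed.

Lemma IL5 A (p1 p2 p3 p4 p5 : qpt) (l1 l2 l3 l4 l5 : rat) :
  conv A p1 -> conv A p2 -> conv A p3 -> conv A p4 -> conv A p5 ->
  0 < l1 -> 0 < l2 -> 0 < l3 -> 0 < l4 -> 0 < l5 ->
  l1 *: p1 + l2 *: p2 + l3 *: p3 + l4 *: p4 + l5 *: p5 = 0 ->
  dQ p1 p2 p3 != 0 -> interior A 0.
Proof.
move=> c1 c2 c3 c4 c5 h1 h2 h3 h4 h5 hrel hD.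
have comb : forall n1 n2 n3 n4 n5 : rat, 0 <= n1 -> 0 <= n2 -> 0 <= n3 -> 0 <= n4 -> 0 <= n5 ->
    n1 + n2 + n3 + n4 + n5 = 1 -> conv A (n1 *: p1 + n2 *: p2 + n3 *: p3 + n4 *: p4 + n5 *: p5).
  move=> n1 n2 n3 n4 n5 g1 g2 g3 g4 g5 hs.
  have := @conv_comb A [:: (n1, p1); (n2, p2); (n3, p3); (n4, p4); (n5, p5)].
  rewrite !big_cons !big_nil /= !addr0 !addrA; apply; last exact: hs.
  by do !split.
apply: absorb_interior.
  set L := l1 + l2 + l3 + l4 + l5.
  have hL : 0 < L by rewrite /L; lra.
  have -> : (0 : qpt) = (l1 / L) *: p1 + (l2 / L) *: p2 + (l3 / L) *: p3 + (l4 / L) *: p4 + (l5 / L) *: p5.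
    have -> : (l1 / L) *: p1 + (l2 / L) *: p2 + (l3 / L) *: p3 + (l4 / L) *: p4 + (l5 / L) *: p5
       = L^-1 *: (l1 *: p1 + l2 *: p2 + l3 *: p3 + l4 *: p4 + l5 *: p5).
      apply: rv3_ext; rewrite !cE; field; by rewrite gt_eqF.
    by rewrite hrel scaler0.
  have gL : forall l, 0 < l -> 0 <= l / L by move=> l hl; apply: divr_ge0; apply: ltW.
  apply: comb; try (apply: gL; assumption).
  rewrite /L; field; by rewrite -/L gt_eqF.
move=> d.
set D := dQ p1 p2 p3.
set a1 := dQ d p2 p3 / D; set a2 := dQ p1 d p3 / D; set a3 := dQ p1 p2 d / D.
have hd : d = a1 *: p1 + a2 *: p2 + a3 *: p3.
  have -> : a1 *: p1 + a2 *: p2 + a3 *: p3 =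
     D^-1 *: (dQ d p2 p3 *: p1 + dQ p1 d p3 *: p2 + dQ p1 p2 d *: p3).
    by apply: rv3_ext; rewrite !cE /a1 /a2 /a3; field.
  by rewrite -cramerQ scalerA mulVf // scale1r.
set x1 := `|a1| / l1; set x2 := `|a2| / l2; set x3 := `|a3| / l3.
have ex1 : x1 * l1 = `|a1| by rewrite /x1 mulfVK // gt_eqF.
have ex2 : x2 * l2 = `|a2| by rewrite /x2 mulfVK // gt_eqF.
have ex3 : x3 * l3 = `|a3| by rewrite /x3 mulfVK // gt_eqF.
have gx1 : 0 <= x1 by apply: divr_ge0 => //; apply: ltW.
have gx2 : 0 <= x2 by apply: divr_ge0 => //; apply: ltW.
have gx3 : 0 <= x3 by apply: divr_ge0 => //; apply: ltW.
have na1 := ler_norm a1; have /andP [na1' _] : - `|a1| <= a1 <= `|a1| by rewrite -ler_norml.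
have na2 := ler_norm a2; have /andP [na2' _] : - `|a2| <= a2 <= `|a2| by rewrite -ler_norml.
have na3 := ler_norm a3; have /andP [na3' _] : - `|a3| <= a3 <= `|a3| by rewrite -ler_norml.
set T := 1 + x1 + x2 + x3.
have q12 : 0 <= x2 * l1 by apply: mulr_ge0 => //; apply: ltW.
have q13 : 0 <= x3 * l1 by apply: mulr_ge0 => //; apply: ltW.
have q21 : 0 <= x1 * l2 by apply: mulr_ge0 => //; apply: ltW.
have q23 : 0 <= x3 * l2 by apply: mulr_ge0 => //; apply: ltW.
have q31 : 0 <= x1 * l3 by apply: mulr_ge0 => //; apply: ltW.
have q32 : 0 <= x2 * l3 by apply: mulr_ge0 => //; apply: ltW.
have hT : 1 <= T by rewrite /T; lra.
have n1 : 0 < a1 + T * l1.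
  have -> : T * l1 = l1 + x1 * l1 + x2 * l1 + x3 * l1 by rewrite /T; ring.
  lra.
have n2 : 0 < a2 + T * l2.
  have -> : T * l2 = l2 + x1 * l2 + x2 * l2 + x3 * l2 by rewrite /T; ring.
  lra.
have n3 : 0 < a3 + T * l3.
  have -> : T * l3 = l3 + x1 * l3 + x2 * l3 + x3 * l3 by rewrite /T; ring.
  lra.
have n4 : 0 < T * l4 by apply: mulr_gt0 => //; lra.
have n5 : 0 < T * l5 by apply: mulr_gt0 => //; lra.
set s := (a1 + T * l1) + (a2 + T * l2) + (a3 + T * l3) + T * l4 + T * l5.
have hs : 0 < s by rewrite /s; lra.
exists s^-1; split; first by rewrite invr_gt0.
have -> : s^-1 *: d = ((a1 + T * l1) / s) *: p1 + ((a2 + T * l2) / s) *: p2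
    + ((a3 + T * l3) / s) *: p3 + (T * l4 / s) *: p4 + (T * l5 / s) *: p5.
  have -> : ((a1 + T * l1) / s) *: p1 + ((a2 + T * l2) / s) *: p2
    + ((a3 + T * l3) / s) *: p3 + (T * l4 / s) *: p4 + (T * l5 / s) *: p5
    = s^-1 *: ((a1 *: p1 + a2 *: p2 + a3 *: p3) +
         T *: (l1 *: p1 + l2 *: p2 + l3 *: p3 + l4 *: p4 + l5 *: p5)).
    by apply: rv3_ext; rewrite !cE; field; rewrite gt_eqF.
  by rewrite hrel scaler0 addr0 -hd.
have gs : forall l, 0 < l -> 0 <= l / s by move=> l hl; apply: divr_ge0; apply: ltW.
apply: comb; try (apply: gs; assumption).
rewrite /s; field; by rewrite -/s gt_eqF.
Qed.

Definition P3 (t1 t2 : lpt) : lpt := - (2%:Z *: t1) - t2.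

Lemma interior_sub (A B : lpt -> Prop) x : (forall v, A v -> conv B (toQ v)) ->
  interior A x -> interior B x.
Proof.
move=> h [e [he hy]]; exists e; split => // y /hy; exact: conv_conv.
Qed.

Lemma RL0 S rho (t1 t2 x y : lpt) :
  minimal_fano S -> vertex S rho ->
  conv (polytope S) (toQ t1) -> conv (polytope S) (toQ t2) ->
  conv (polytope S) (toQ (P3 t1 t2)) ->
  conv (polytope S) (toQ x) -> conv (polytope S) (toQ y) ->
  t1 != rho -> t2 != rho -> P3 t1 t2 != rho -> x != rho -> y != rho ->
  0 < dZ t1 t2 x -> dZ t1 t2 y < 0 -> False.
Proof.
move=> [[_ hF] hmin] hv c1 c2 c3 cx cy n1 n2 n3 nx ny hx hy.
apply: (hmin rho hv); split; last first.
  move=> z hz; apply: hF; apply: interior_sub hz => v [hv' _]; exact: hv'.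
set A := fun z => _.
have cA : forall v, conv (polytope S) (toQ v) -> v != rho -> conv A (toQ v).
  by move=> v h1 h2; apply: conv_pt; split.
set Dx := dZ t1 t2 x; set Dy := dZ t1 t2 y.
set k1 := dZ y t2 x; set k2 := dZ t1 y x.
set T := `|k1| + `|k2| + 1.
have R : (2 * T - k1) *: t1 + (T - k2) *: t2 + (- Dy) *: x + Dx *: y + T *: P3 t1 t2 = 0.
  rewrite /Dx (cramerZ t1 t2 x y) -/k1 -/k2 -/Dy /P3.
  apply: rv3_ext; rewrite !cE; ring.
have RQ := congr1 toQ R.
rewrite !toQD !toQZ toQ0 /= in RQ.
have k1n := ler_norm k1; have /andP [k1n' _] : - `|k1| <= k1 <= `|k1| by rewrite -ler_norml.
have k2n := ler_norm k2; have /andP [k2n' _] : - `|k2| <= k2 <= `|k2| by rewrite -ler_norml.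
have g1 : (0 : int) < 2 * T - k1 by rewrite /T; lia.
have g2 : (0 : int) < T - k2 by rewrite /T; lia.
have g3 : (0 : int) < - Dy by lia.
have g5 : (0 : int) < T by rewrite /T; lia.
apply: (IL5 (cA _ c1 n1) (cA _ c2 n2) (cA _ cx nx) (cA _ cy ny) (cA _ c3 n3) _ _ _ _ _ RQ).
- by rewrite ltr0z.
- by rewrite ltr0z.
- by rewrite ltr0z.
- by rewrite ltr0z.
- by rewrite ltr0z.
- by rewrite dQ_toQ intr_eq0 -/Dx gt_eqF.
Qed.

Lemma RL S rho (t1 t2 x y : lpt) :
  minimal_fano S -> vertex S rho ->
  conv (polytope S) (toQ t1) -> conv (polytope S) (toQ t2) ->
  conv (polytope S) (toQ (P3 t1 t2)) ->
  conv (polytope S) (toQ x) -> conv (polytope S) (toQ y) ->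
  t1 != rho -> t2 != rho -> P3 t1 t2 != rho -> x != rho -> y != rho ->
  dZ t1 t2 x * dZ t1 t2 y < 0 -> False.
Proof.
move=> hm hv c1 c2 c3 cx cy n1 n2 n3 nx ny h.
have [hx|hx|hx] := ltrgtP 0 (dZ t1 t2 x).
- apply: (RL0 hm hv c1 c2 c3 cx cy n1 n2 n3 nx ny hx).
  by rewrite -(pmulr_rlt0 _ hx).
- apply: (RL0 hm hv c1 c2 c3 cy cx n1 n2 n3 ny nx _ hx).
  by rewrite -(nmulr_rlt0 _ hx).
- by rewrite -hx mul0r ltxx in h.
Qed.

Lemma wsum_ge0 (T : eqType) (l : seq (rat * T)) (P : pred (rat * T)) :
  (forall p, p \in l -> 0 <= p.1) -> 0 <= \sum_(p <- l | P p) p.1.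
Proof.
move=> h; rewrite big_seq_cond; apply: sumr_ge0 => p /andP [hp _]; exact: h.
Qed.

Lemma wsum_eq0 (T : eqType) (l : seq (rat * T)) (P : pred (rat * T)) :
  (forall p, p \in l -> 0 <= p.1) -> \sum_(p <- l | P p) p.1 = 0 ->
  forall p, p \in l -> P p -> p.1 = 0.
Proof.
move=> h; rewrite big_seq_cond => /eqP; rewrite psumr_eq0.
  by move=> /allP H p hp hP; apply/eqP; move: (H p hp); rewrite hp hP.
by move=> p /andP [hp _]; exact: h.
Qed.

Lemma dec (B : lpt -> Prop) (q : lpt) x :
  conv (fun w => B w \/ w = q) x ->
  x = toQ q \/ exists lam : rat, 0 <= lam < 1 /\ exists y, conv B y /\ x = lam *: toQ q + (1 - lam) *: y.
Proof.
move=> /conv_convL [l [hl [h1 hx]]].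
have hl' := iffLR (allP_in _ _) hl.
have hw : forall p, p \in l -> 0 <= p.1 by move=> p /hl' [].
set lam := \sum_(p <- l | p.2 == q) p.1.
set rw := \sum_(p <- l | p.2 != q) p.1.
set rv := \sum_(p <- l | p.2 != q) p.1 *: toQ p.2.
have e1 : lam + rw = 1 by rewrite -h1 (bigID (fun p => p.2 == q)).
have e2 : x = lam *: toQ q + rv.
  rewrite hx (bigID (fun p => p.2 == q)) /= -/rv; congr (_ + _).
  rewrite /lam scaler_suml; apply: eq_bigr => p /eqP -> //.
have glam : 0 <= lam by apply: wsum_ge0.
have grw : 0 <= rw by apply: wsum_ge0.
have [rw0|rwp] := eqVneq rw 0.
  left; rewrite e2; have -> : rv = 0.
    rewrite /rv big_seq_cond; apply: big1 => p /andP [hp hpq].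
    by rewrite (wsum_eq0 hw rw0 hp hpq) scale0r.
  have -> : lam = 1 by rewrite -e1 rw0 addr0.
  by rewrite scale1r addr0.
right; exists lam; split.
  by apply/andP; split => //; rewrite -e1 ltrDl lt_def rwp grw.
exists (rw^-1 *: rv); split; last first.
  by rewrite e2 -e1 addrAC subrr add0r scalerA mulfV // scale1r.
apply/conv_convL.
exists [seq (p.1 / rw, p.2) | p <- [seq p <- l | p.2 != q]]; split; [|split].
- apply: allP_map; apply/allP_in => p; rewrite mem_filter => /andP [hpq hp] /=.
  have [hp1 [hB|hq]] := hl' p hp; last by rewrite hq eqxx in hpq.
  split => //; apply: divr_ge0 => //.
- by rewrite big_map big_filter /= -mulr_suml mulfV.
- by rewrite big_map big_filter /rv scaler_sumr; apply: eq_bigr => p _; rewrite /= scalerA mulrC.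
Qed.


Lemma vs S s v : s \in S -> conv (fun w => w \in S /\ w != s) (toQ s) ->
  vertex (filter (predC1 s) S) v -> vertex S v.
Proof.
move=> sS hs [vS' hv]; move: (vS'); rewrite mem_filter => /andP [vs vS].
split => // H.
set B := fun w => w \in filter (predC1 s) S /\ w != v.
have H' : conv (fun w => B w \/ w = s) (toQ v).
  apply: conv_mono H => w [wS wv]; have [->|ws] := eqVneq w s; first by right.
  by left; split => //; rewrite mem_filter /= ws wS.
have hs' : conv (fun w => B w \/ w = v) (toQ s).
  apply: conv_mono hs => w [wS ws]; have [->|wv] := eqVneq w v; first by right.
  by left; split => //; rewrite mem_filter /= ws wS.
case: (dec H') => [/toQ_inj e|[L [/andP [L0 L1] [y [hy ev]]]]].
  by move: vs; rewrite /= e eqxx.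
case: (dec hs') => [/toQ_inj e|[K [/andP [K0 K1] [y' [hy' es]]]]].
  by move: vs; rewrite /= e eqxx.
apply: hv.
have hLK : L * K < 1 by nra.
set den := 1 - L * K.
have dn : den != 0 by rewrite /den gt_eqF // subr_gt0.
have -> : toQ v = (L * (1 - K) / den) *: y' + (1 - L * (1 - K) / den) *: y.
  apply/rowP => i.
  have Hv := congr1 (fun z : qpt => z ord0 i) ev.
  have Hs := congr1 (fun z : qpt => z ord0 i) es.
  rewrite /= !cE in Hv Hs; rewrite !cE.
  rewrite Hs in Hv; move: Hv; set vi := ((v ord0 i)%:~R : rat) => Hv.
  apply/eqP; rewrite -subr_eq0.
  have -> : vi - (L * (1 - K) / den * y' ord0 i + (1 - L * (1 - K) / den) * y ord0 i)
     = (vi - (L * (K * vi + (1 - K) * y' ord0 i) + (1 - L) * y ord0 i)) / den.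
    by rewrite /den; field; rewrite -/den.
  by rewrite -Hv subrr mul0r.
apply: conv_two => //; apply/andP; split.
- apply: divr_ge0; first by apply: mulr_ge0 => //; lra.
  by rewrite /den; lra.
- rewrite ler_pdivrMr ?mul1r /den; first by nra.
  by rewrite /den; lra.
Qed.

Lemma KM n : forall S, (size S <= n)%N -> forall s, s \in S -> conv (vertex S) (toQ s).
Proof.
elim: n => [|n IH] S hS s sS.
  by move: hS; rewrite leqn0 => /nilP hS; rewrite hS in sS.
case: (classic (vertex S s)) => [hv|hnv]; first by apply: conv_pt.
have hc : conv (fun w => w \in S /\ w != s) (toQ s).
  by apply: NNPP => hn; apply: hnv; split.
set S' := filter (predC1 s) S.
have hS' : (size S' <= n)%N.
  have : (size S' < size S)%N.
    rewrite size_filter -(count_predC (pred1 s)) -addn1 addnC leq_add2r.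
    by rewrite -has_count has_pred1.
  move=> h; rewrite -ltnS; exact: leq_trans h hS.
apply: (@conv_mono (vertex S') _ _ (fun v => @vs S s v sS hc)).
apply: conv_conv hc => w [wS ws]; apply: (IH S' hS' w).
by rewrite mem_filter /= ws wS.
Qed.

Lemma decomp (e1 e2 x s : lpt) (g m : int) : lattice_basis2 e1 e2 ->
  dZ e1 e2 x = g -> g != 0 -> dZ e1 e2 s = g * m ->
  exists M M' : int, s = M *: e1 + M' *: e2 + m *: x.
Proof.
move=> [_ hint] hg g0 hs.
set y := s - m *: x.
have hy : g *: y = dZ s e2 x *: e1 + dZ e1 s x *: e2.
  rewrite /y scalerBr; have := cramerZ e1 e2 x s; rewrite hg hs => ->.
  apply: rv3_ext; rewrite !cE; ring.
have [M [M' hM]] : exists M M' : int, y = M *: e1 + M' *: e2.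
  apply: hint; exists ((dZ s e2 x)%:~R / g%:~R), ((dZ e1 s x)%:~R / g%:~R).
  have gq : (g%:~R : rat) != 0 by rewrite intr_eq0.
  apply/rowP => i; have := congr1 (fun z : lpt => z ord0 i) hy.
  rewrite /= !cE => /(congr1 (fun z : int => (z%:~R : rat))).
  rewrite !(rmorphD, rmorphM) /= => h.
  apply: (mulfI gq); rewrite h; field; exact: gq.
exists M, M'; rewrite -hM /y; apply: rv3_ext; rewrite !cE; ring.
Qed.

Lemma lb_indep (e1 e2 : lpt) : lattice_basis2 e1 e2 ->
  forall p q : int, p *: e1 + q *: e2 = 0 -> p = 0 /\ q = 0.
Proof.
move=> [hind _] p q h.
have := hind p%:~R q%:~R; rewrite -!toQZ -toQD h toQ0 => /(_ erefl) [].
by move/eqP; rewrite intr_eq0 => /eqP -> /eqP; rewrite intr_eq0 => /eqP ->.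
Qed.

Definition std0 : lpt := mkpt 1 0 0.
Definition std1 : lpt := mkpt 0 1 0.
Definition std2 : lpt := mkpt 0 0 1.

Lemma BE (e1 e2 : lpt) : lattice_basis2 e1 e2 -> exists x, dZ e1 e2 x = 1.
Proof.
move=> hb.
set n0 := dZ e1 e2 std0; set n1 := dZ e1 e2 std1; set n2 := dZ e1 e2 std2.
have lin : forall a b c, dZ e1 e2 (mkpt a b c) = a * n0 + b * n1 + c * n2.
  move=> a b c; rewrite /n0 /n1 /n2 /std0 /std1 /std2 /dZ ?mkpt0 ?mkpt1 ?mkpt2; ring.
have nz : ~ [/\ n0 = 0, n1 = 0 & n2 = 0].
  move=> [z0 z1 z2].
  set a0 := e1 ord0 i0; set a1 := e1 ord0 i1; set a2 := e1 ord0 i2.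
  set b0 := e2 ord0 i0; set b1 := e2 ord0 i1; set b2 := e2 ord0 i2.
  have idt : (a0*a0 + a1*a1 + a2*a2) *: e2 + (- (a0*b0 + a1*b1 + a2*b2)) *: e1 = 0.
    have -> : (a0*a0 + a1*a1 + a2*a2) *: e2 + (- (a0*b0 + a1*b1 + a2*b2)) *: e1 =
        mkpt (a2 * n1 - a1 * n2) (a0 * n2 - a2 * n0) (a1 * n0 - a0 * n1).
      apply: rv3_ext; rewrite !cE ?mkpt0 ?mkpt1 ?mkpt2 /n0 /n1 /n2 /std0 /std1 /std2 /dZ
        ?mkpt0 ?mkpt1 ?mkpt2 /a0 /a1 /a2 /b0 /b1 /b2; ring.
    by rewrite z0 z1 z2 !mulr0 subr0; apply: rv3_ext; rewrite !cE ?mkpt0 ?mkpt1 ?mkpt2.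
  rewrite addrC in idt; have [_ h1] := lb_indep hb idt.
  have e10 : e1 = 0.
    have [A0 [A1 A2]] : [/\ a0 = 0, a1 = 0 & a2 = 0] by split; nia.
    apply: rv3_ext; by rewrite cZ0 -/a0 -/a1 -/a2.
  have [] := lb_indep hb (p := 1) (q := 0).
    by rewrite e10 scaler0 scale0r addr0.
  by [].
have [u1 [v1 hb1]] := Bezoutz n0 n1.
have [u2 [v2 hb2]] := Bezoutz (gcdz n0 n1) n2.
set g := gcdz (gcdz n0 n1) n2.
set x := mkpt (u2 * u1) (u2 * v1) v2.
have hx : dZ e1 e2 x = g by rewrite lin /g -hb2 -hb1; ring.
have g0 : g != 0.
  rewrite /g gcdz_eq0 gcdz_eq0; apply/negP => /andP [/andP [/eqP ? /eqP ?] /eqP ?]; exact: nz.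
have gpos : 0 < g by rewrite lt_def g0 /g /gcdz.
have d0 : (g %| n0)%Z by apply: dvdz_trans (dvdz_gcdl _ _) (dvdz_gcdl _ _).
have d1 : (g %| n1)%Z by apply: dvdz_trans (dvdz_gcdl _ _) (dvdz_gcdr _ _).
have d2 : (g %| n2)%Z by apply: dvdz_gcdr.
case/dvdzP: d0 => m0 hm0; case/dvdzP: d1 => m1 hm1; case/dvdzP: d2 => m2 hm2.
have [M0 [M0' h0]] : exists M M' : int, std0 = M *: e1 + M' *: e2 + m0 *: x.
  by apply: (decomp hb hx g0); rewrite -/n0 hm0 mulrC.
have [M1 [M1' h1]] : exists M M' : int, std1 = M *: e1 + M' *: e2 + m1 *: x.
  by apply: (decomp hb hx g0); rewrite -/n1 hm1 mulrC.
have [M2 [M2' h2]] : exists M M' : int, std2 = M *: e1 + M' *: e2 + m2 *: x.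
  by apply: (decomp hb hx g0); rewrite -/n2 hm2 mulrC.
have : dZ std0 std1 std2 = 1 by rewrite /dZ /std0 /std1 /std2 ?mkpt0 ?mkpt1 ?mkpt2; ring.
rewrite h0 h1 h2.
have -> : dZ (M0 *: e1 + M0' *: e2 + m0 *: x) (M1 *: e1 + M1' *: e2 + m1 *: x)
    (M2 *: e1 + M2' *: e2 + m2 *: x) =
  (M0 * (M1' * m2 - m1 * M2') - M0' * (M1 * m2 - m1 * M2) + m0 * (M1 * M2' - M1' * M2))
   * dZ e1 e2 x.
  by rewrite /dZ !cE; ring.
rewrite hx; move: (M0 * _ - _ + _) => D hg1.
exists x; rewrite hx; clearbody g; clear -hg1 gpos.
have [hD|hD] : D <= 0 \/ 1 <= D by lia.
- have : D * g <= 0 by apply: mulr_le0_ge0 => //; apply: ltW.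
  lia.
- have : 0 <= (D - 1) * g by apply: mulr_ge0; [lia| apply: ltW].
  rewrite mulrBl mul1r; lia.
Qed.

Lemma span_of (f1 f2 xf z : lpt) : dZ f1 f2 xf = 1 -> dZ f1 f2 z = 0 ->
  toQ z = (dZ z f2 xf)%:~R *: toQ f1 + (dZ f1 z xf)%:~R *: toQ f2.
Proof.
move=> h1 h0; have := cramerZ f1 f2 xf z; rewrite h1 h0 scale1r scale0r addr0 => E.
by rewrite {1}E toQD !toQZ.
Qed.

Lemma span_trans (e1 e2 f1 f2 : lpt) (a b c d : rat) :
  toQ e1 = a *: toQ f1 + b *: toQ f2 -> toQ e2 = c *: toQ f1 + d *: toQ f2 ->
  forall x, in_span2 e1 e2 x -> in_span2 f1 f2 x.
Proof.
move=> h1 h2 x [p [q ->]]; exists (p * a + q * c), (p * b + q * d).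
rewrite h1 h2; apply: rv3_ext; rewrite !cE; ring.
Qed.

Lemma NZ (e1 e2 f1 f2 : lpt) : lattice_basis2 e1 e2 -> lattice_basis2 f1 f2 ->
  ~ (forall x, in_span2 e1 e2 x <-> in_span2 f1 f2 x) ->
  ~ (dZ f1 f2 e1 = 0 /\ dZ f1 f2 e2 = 0).
Proof.
move=> he hf hn [z1 z2]; apply: hn.
have [xf hxf] := BE hf; have [xe hxe] := BE he.
have E1 := span_of hxf z1; have E2 := span_of hxf z2.
have k1 : dZ e1 e2 f1 = 0.
  have := cramerZ f1 f2 xf e1; rewrite hxf z1 scale1r scale0r addr0 => ->.
  have := cramerZ f1 f2 xf e2; rewrite hxf z2 scale1r scale0r addr0 => ->.
  rewrite /dZ !cE; ring.
have k2 : dZ e1 e2 f2 = 0.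
  have := cramerZ f1 f2 xf e1; rewrite hxf z1 scale1r scale0r addr0 => ->.
  have := cramerZ f1 f2 xf e2; rewrite hxf z2 scale1r scale0r addr0 => ->.
  rewrite /dZ !cE; ring.
have F1 := span_of hxe k1; have F2 := span_of hxe k2.
move=> x; split; [exact: (span_trans E1 E2 (x:=x))|exact: (span_trans F1 F2 (x:=x))].
Qed.

Definition mat3 (r1 r2 r3 : lpt) : 'M[int]_3 :=
  \matrix_(i < 3, j < 3) (if (i : nat) == 0%N then r1 ord0 j else if (i : nat) == 1%N then r2 ord0 j else r3 ord0 j).

Lemma mat3_mul (a b c : int) r1 r2 r3 :
  mkpt a b c *m mat3 r1 r2 r3 = a *: r1 + b *: r2 + c *: r3.
Proof.
apply/rowP => j; rewrite !mxE !big_ord_recr big_ord0 /= add0r !mxE /=.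
by [].
Qed.

Ltac ord3 o := let E := fresh "E" in first [
  assert (E : o = i0) by (apply: val_inj; rewrite /= ?inordK //) |
  assert (E : o = i1) by (apply: val_inj; rewrite /= ?inordK //) |
  assert (E : o = i2) by (apply: val_inj; rewrite /= ?inordK //) ]; rewrite E; clear E.

Ltac fixord := repeat match goal with
 | |- context [ @fun_of_matrix _ _ _ ?r ord0 ?o ] =>
   lazymatch o with inord _ => fail | _ => ord3 o end
 end.

Lemma mat3_det r1 r2 r3 : \det (mat3 r1 r2 r3) = dZ r1 r2 r3.
Proof.
rewrite (expand_det_row _ ord0) !big_ord_recr big_ord0 /= add0r.
rewrite /cofactor.
do 3 rewrite (expand_det_row _ ord0) !big_ord_recr big_ord0 /= add0r.
rewrite /cofactor !det_mx11 !mxE /=.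
fixord.
rewrite /dZ; ring.
Qed.

Lemma vin S v : vertex S v -> conv (polytope S) (toQ v).
Proof. by move=> [h _]; apply: conv_pt. Qed.

Lemma neq_dZ t1 t2 a b : dZ t1 t2 a != dZ t1 t2 b -> a != b.
Proof. by apply: contra => /eqP ->. Qed.

Lemma tri_distinct e1 e2 : lattice_basis2 e1 e2 ->
  [/\ e1 != e2, e1 != P3 e1 e2 & e2 != P3 e1 e2].
Proof.
move=> hb; split; apply/eqP => h.
- have [] := lb_indep hb (p := 1) (q := -1); last by [].
  by rewrite h scaleN1r scale1r subrr.
- have [] := lb_indep hb (p := 3) (q := 1); last by [].
  have -> : 3 *: e1 + 1 *: e2 = e1 - P3 e1 e2 by rewrite /P3; apply: rv3_ext; rewrite !cE; ring.
  by rewrite -h subrr.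
- have [] := lb_indep hb (p := 2) (q := 2); last by [].
  have -> : 2 *: e1 + 2 *: e2 = e2 - P3 e1 e2 by rewrite /P3; apply: rv3_ext; rewrite !cE; ring.
  by rewrite -h subrr.
Qed.

Lemma conv3 A (p q r : qpt) (a b c : rat) : conv A p -> conv A q -> conv A r ->
  0 <= a -> 0 <= b -> 0 <= c -> a + b + c = 1 -> conv A (a *: p + b *: q + c *: r).
Proof.
move=> hp hq hr ha hb hc hs.
have := @conv_comb A [:: (a, p); (b, q); (c, r)].
rewrite !big_cons !big_nil /= !addr0 !addrA; apply; last exact: hs.
by do !split.
Qed.

Lemma conv4 A (p q r s : qpt) (a b c d : rat) : conv A p -> conv A q -> conv A r -> conv A s ->
  0 <= a -> 0 <= b -> 0 <= c -> 0 <= d -> a + b + c + d = 1 ->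
  conv A (a *: p + b *: q + c *: r + d *: s).
Proof.
move=> hp hq hr hs ha hb hc hd h1.
have := @conv_comb A [:: (a, p); (b, q); (c, r); (d, s)].
rewrite !big_cons !big_nil /= !addr0 !addrA; apply; last exact: h1.
by do !split.
Qed.

Lemma final_equiv S (L M : seq lpt) A :
  (forall rho, vertex S rho -> rho \in L) -> (forall p, p \in L -> p \in S) ->
  (forall p, (p \in map (fun v : lpt => v *m A) M) = (p \in L)) -> equiv_to S A M.
Proof.
move=> hv hS hM x; split.
- apply: conv_conv => s sS.
  apply: (@conv_mono (vertex S)); last exact: (KM (leqnn (size S)) sS).
  by move=> v /hv; rewrite /polytope hM.
- apply: conv_mono => p; rewrite /polytope hM; exact: hS.
Qed.

Lemma dZP3 t1 t2 a b : dZ t1 t2 (P3 a b) = -2 * dZ t1 t2 a - dZ t1 t2 b.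
Proof. rewrite /dZ /P3 !cE; ring. Qed.
Lemma dZ11 t1 t2 : dZ t1 t2 t1 = 0. Proof. rewrite /dZ; ring. Qed.
Lemma dZ22 t1 t2 : dZ t1 t2 t2 = 0. Proof. rewrite /dZ; ring. Qed.

Lemma shared S e1 e2 f1 f2 : minimal_fano S -> P112_triangle S e1 e2 -> P112_triangle S f1 f2 ->
  ~ (dZ f1 f2 e1 = 0 /\ dZ f1 f2 e2 = 0) ->
  let F := fun r => r = f1 \/ r = f2 \/ r = P3 f1 f2 in F e1 \/ F e2 \/ F (P3 e1 e2).
Proof.
move=> hm [he [v1 [v2 v3]]] [hf [w1 [w2 w3]]] hnz F.
apply: NNPP => hn.
have n1 : ~ F e1 by move=> h; apply: hn; left.
have n2 : ~ F e2 by move=> h; apply: hn; right; left.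
have n3 : ~ F (P3 e1 e2) by move=> h; apply: hn; right; right.
have [d12 d13 d23] := tri_distinct he.
have nF : forall r, ~ F r -> [/\ f1 != r, f2 != r & P3 f1 f2 != r].
  move=> r hr; split; apply/eqP => h; apply: hr; rewrite -h /F; [by left|by right; left|by right; right].
have RLf : forall rho x y, vertex S rho -> ~ F rho -> vertex S x -> vertex S y ->
    x != rho -> y != rho -> dZ f1 f2 x * dZ f1 f2 y < 0 -> False.
  move=> rho x y hr hF hx hy nx ny hp; have [a1 a2 a3] := nF rho hF.
  exact: (RL hm hr (vin w1) (vin w2) (vin w3) (vin hx) (vin hy) a1 a2 a3 nx ny hp).
have hc := dZP3 f1 f2 e1 e2.
set a := dZ f1 f2 e1 in hnz hc *; set b := dZ f1 f2 e2 in hnz hc *.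
set c := dZ f1 f2 (P3 e1 e2) in hc *.
have [a0|a0] := eqVneq a 0.
  apply: (RLf e1 e2 (P3 e1 e2) v1 n1 v2 v3); first by rewrite eq_sym.
    by rewrite eq_sym.
  rewrite -/b -/c hc a0; have : b != 0 by apply/eqP => b0; apply: hnz.
  by move=> hb; nia.
have [b0|b0] := eqVneq b 0.
  apply: (RLf e2 e1 (P3 e1 e2) v2 n2 v1 v3) => //; first by rewrite eq_sym.
  rewrite -/a -/c hc b0; nia.
have [c0|c0] := eqVneq c 0.
  apply: (RLf (P3 e1 e2) e1 e2 v3 n3 v1 v2) => //.
  rewrite -/a -/b; have : b = -2 * a by lia.
  move=> ->; nia.
case: (boolP (b * c < 0)) => hbc.
  apply: (RLf e1 e2 (P3 e1 e2) v1 n1 v2 v3) => //; by rewrite eq_sym.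
apply: (RLf e2 e1 (P3 e1 e2) v2 n2 v1 v3) => //; first by rewrite eq_sym.
rewrite -/a -/c; move: hbc; rewrite -/b -/c => hbc; nia.
Qed.

Lemma pickXY (k a b : int) : 0 <= a -> a < k -> 0 <= b -> b < k ->
 (exists X Y mX mY : int, X = a + k * mX /\ Y = b + k * mY /\ X + Y <= k - 1 /\ Y - X <= k - 1 /\ X - 3 * Y <= k - 1) \/ (a = b /\ 2 * a = k).
Proof.
move=> a0 ak b0 bk.
have [h1|h1] : a + b <= k - 1 \/ k <= a + b by lia.
  left; exists a, b, 0, 0; rewrite !mulr0 !addr0; lia.
have [h2|h2] : b < a \/ a <= b by lia.
  left; exists (a - k), b, (-1), 0; rewrite mulr0 addr0 mulrN1; lia.
have [h3|h3] : a + k + 1 <= 3 * b \/ 3 * b <= a + k by lia.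
  left; exists (a - k), (b - k), (-1), (-1); rewrite mulrN1; lia.
right; lia.
Qed.

Lemma divmod (m k : int) : 0 < k -> exists a q : int, m = a + k * q /\ 0 <= a /\ a < k.
Proof.
move=> hk; exists (m %% k)%Z, (m %/ k)%Z; split; last split.
- by rewrite {1}(divz_eq m k) addrC mulrC.
- by apply: modz_ge0; rewrite gt_eqF.
- exact: ltz_pmod.
Qed.

Lemma unit_int (D g : int) : D * g = 1 -> 0 < g -> g = 1.
Proof.
move=> h1 h2.
have [hD|hD] : D <= 0 \/ 1 <= D by lia.
- have : D * g <= 0 by apply: mulr_le0_ge0 => //; apply: ltW.
  lia.
- have : 0 <= (D - 1) * g by apply: mulr_ge0; [lia| apply: ltW].
  rewrite mulrBl mul1r; lia.
Qed.

Lemma W S t1 t2 rho x z : minimal_fano S -> vertex S rho ->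
  conv (polytope S) (toQ t1) -> conv (polytope S) (toQ t2) -> conv (polytope S) (toQ (P3 t1 t2)) ->
  conv (polytope S) (toQ x) -> conv (polytope S) (toQ z) ->
  dZ t1 t2 x != 0 -> dZ t1 t2 rho = -2 * dZ t1 t2 x -> dZ t1 t2 z = - dZ t1 t2 x -> False.
Proof.
move=> hm hr c1 c2 c3 cx cz hx hrho hz.
apply: (RL hm hr c1 c2 c3 cx cz); try apply: (@neq_dZ t1 t2).
- rewrite dZ11 hrho; apply/eqP; move/eqP: hx; lia.
- rewrite dZ22 hrho; apply/eqP; move/eqP: hx; lia.
- rewrite dZP3 dZ11 dZ22 hrho; apply/eqP; move/eqP: hx; lia.
- rewrite hrho; apply/eqP; move/eqP: hx; lia.
- rewrite hz hrho; apply/eqP; move/eqP: hx; lia.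
- rewrite hz; move/eqP: hx; nia.
Qed.

Lemma caseI S e1 e2 f2 : minimal_fano S -> lattice_basis2 e1 e2 -> lattice_basis2 e1 f2 ->
  vertex S e1 -> vertex S e2 -> vertex S (P3 e1 e2) -> vertex S f2 -> vertex S (P3 e1 f2) ->
  dZ e1 e2 f2 != 0 -> exists A, GL3Z A /\ (equiv_to S A M1 \/ equiv_to S A M2).
Proof.
move=> hm lbE lbF v1 v2 v3 v4 v5 hK.
set K := dZ e1 e2 f2 in hK.
have dh : dZ e1 e2 (P3 e1 f2) = - K by rewrite dZP3 dZ11; ring.
have hvert : forall rho, vertex S rho ->
    rho = e1 \/ rho = e2 \/ rho = P3 e1 e2 \/ rho = f2 \/ rho = P3 e1 f2.
  move=> rho hr; apply: NNPP => hn.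
  apply: (RL hm hr (vin v1) (vin v2) (vin v3) (vin v4) (vin v5)).
  all: try (apply/eqP => h; apply: hn; rewrite -h;
    first [by left | by right; left | by do 2 right; left | by do 3 right; left | by do 4 right]).
  by rewrite dh -/K; move/eqP: hK; nia.
have inS : forall p, vertex S p -> p \in S by move=> p [].
have [x0 hx0] := BE lbE.
have cr := cramerZ e1 e2 x0 f2; rewrite hx0 scale1r in cr.
set al := dZ f2 e2 x0 in cr; set be := dZ e1 f2 x0 in cr.
rewrite -/K in cr.
have [x1 [k [sg [hk [hx1 [hsg [hKs hf2]]]]]]] : exists (x1 : lpt) (k sg : int), 0 < k /\
    dZ e1 e2 x1 = sg /\ (sg = 1 \/ sg = -1) /\ K = sg * k /\ f2 = al *: e1 + be *: e2 + k *: x1.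
  have [Kp|Kn] : 0 < K \/ K < 0 by move/eqP: hK; lia.
    by exists x0, K, 1; rewrite mul1r; do !split => //; left.
  exists (- x0), (- K), (-1); split; first lia.
  split; first by rewrite /dZ !cE -hx0 /dZ; ring.
  split; first by right.
  split; first ring.
  by rewrite {1}cr; apply: rv3_ext; rewrite !cE; ring.
have [k1|k2] : k = 1 \/ 2 <= k by lia.
  exists (mat3 e1 e2 f2); split.
    rewrite /GL3Z mat3_det -/K hKs k1 mulr1; case: hsg => ->; [by left|by right].
  left; apply: (@final_equiv S [:: e1; e2; f2; P3 e1 e2; P3 e1 f2]).
  - move=> rho /hvert; rewrite !inE; case=> [->|[->|[->|[->|->]]]]; rewrite eqxx ?orbT //.
  - move=> p; rewrite !inE => /orP [/eqP->|/orP [/eqP->|/orP [/eqP->|/orP [/eqP->|/eqP->]]]];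
    exact: inS.
  - move=> p; rewrite /M1 /= !mat3_mul.
    have -> : 1 *: e1 + 0 *: e2 + 0 *: f2 = e1 by apply: rv3_ext; rewrite !cE; ring.
    have -> : 0 *: e1 + 1 *: e2 + 0 *: f2 = e2 by apply: rv3_ext; rewrite !cE; ring.
    have -> : 0 *: e1 + 0 *: e2 + 1 *: f2 = f2 by apply: rv3_ext; rewrite !cE; ring.
    have -> : (-2) *: e1 + (-1) *: e2 + 0 *: f2 = P3 e1 e2 by rewrite /P3; apply: rv3_ext; rewrite !cE; ring.
    have -> : (-2) *: e1 + 0 *: e2 + (-1) *: f2 = P3 e1 f2 by rewrite /P3; apply: rv3_ext; rewrite !cE; ring.
    by [].
have cf : forall i, f2 ord0 i = al * e1 ord0 i + be * e2 ord0 i + k * x1 ord0 i.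
  by move=> i; rewrite {1}hf2 !cE.
have [a0 [m0 [ha0 [a00 a0k]]]] := divmod (- al) hk.
have [b0 [n0 [hb0 [b00 b0k]]]] := divmod (- be) hk.
have eal : al = - a0 - k * m0 by lia.
have ebe : be = - b0 - k * n0 by lia.
have kq : (k%:~R : rat) != 0 by rewrite intr_eq0 gt_eqF.
case: (pickXY a00 a0k b00 b0k) => [[X [Y [mX [mY [hX [hY [i1 [i2 i3]]]]]]]] | [eab e2a]].
  exfalso.
  set z : lpt := x1 + (mX - m0) *: e1 + (mY - n0) *: e2.
  set w0 : rat := 1 / k%:~R.
  set w1 : rat := (k - 1 + X - Y)%:~R / (2 * k%:~R).
  set w2 : rat := (k - 1 - X + 3 * Y)%:~R / (4 * k%:~R).
  set w3 : rat := (k - 1 - X - Y)%:~R / (4 * k%:~R).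
  have ez : toQ z = w0 *: toQ f2 + w1 *: toQ e1 + w2 *: toQ e2 + w3 *: toQ (P3 e1 e2).
    apply: rv3_ext; rewrite /z /P3 /w0 /w1 /w2 /w3 !cE !cf eal ebe hX hY; field; exact: kq.
  have kp : (0 : rat) < k%:~R by rewrite ltr0z.
  have cz : conv (polytope S) (toQ z).
    rewrite ez; apply: conv4; try exact: vin.
    - by rewrite /w0; apply: divr_ge0 => //; apply: ltW.
    - rewrite /w1; apply: divr_ge0; [rewrite ler0z; lia | apply: mulr_ge0 => //; exact: ltW kp].
    - rewrite /w2; apply: divr_ge0; [rewrite ler0z; lia | apply: mulr_ge0 => //; exact: ltW kp].
    - rewrite /w3; apply: divr_ge0; [rewrite ler0z; lia | apply: mulr_ge0 => //; exact: ltW kp].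
    - rewrite /w0 /w1 /w2 /w3; field; exact: kq.
  have dz : dZ e1 e2 z = sg by rewrite /z /dZ !cE -hx1 /dZ; ring.
  apply: (RL hm v4 (vin v1) (vin v2) (vin v3) cz (vin v5)); try apply: (@neq_dZ e1 e2).
  - by rewrite dZ11 -/K eq_sym.
  - by rewrite dZ22 -/K eq_sym.
  - by rewrite dZP3 dZ11 dZ22 -/K mulr0 subr0 eq_sym.
  - rewrite dz -/K hKs; apply/eqP; case: hsg => ->; lia.
  - rewrite dh -/K; apply/eqP; move/eqP: hK; lia.
  - rewrite dz dh hKs; case: hsg => ->; lia.
have [a1|a2] : a0 = 1 \/ 2 <= a0 by lia.
  set r3 : lpt := x1 + (-1 - m0) *: e1 + (-1 - n0) *: e2.
  exists (mat3 e1 e2 r3); split.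
    rewrite /GL3Z mat3_det.
    have -> : dZ e1 e2 r3 = sg by rewrite /r3 /dZ !cE -hx1 /dZ; ring.
    by case: hsg => ->; [left|right].
  right; apply: (@final_equiv S [:: e1; e2; P3 e1 e2; f2; P3 e1 f2]).
  - move=> rho /hvert; rewrite !inE; case=> [->|[->|[->|[->|->]]]]; rewrite eqxx ?orbT //.
  - move=> p; rewrite !inE => /orP [/eqP->|/orP [/eqP->|/orP [/eqP->|/orP [/eqP->|/eqP->]]]];
    exact: inS.
  - move=> p; rewrite /M2 /= !mat3_mul.
    have -> : 1 *: e1 + 0 *: e2 + 0 *: r3 = e1 by apply: rv3_ext; rewrite !cE; ring.
    have -> : 0 *: e1 + 1 *: e2 + 0 *: r3 = e2 by apply: rv3_ext; rewrite !cE; ring.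
    have -> : (-2) *: e1 + (-1) *: e2 + 0 *: r3 = P3 e1 e2 by rewrite /P3; apply: rv3_ext; rewrite !cE; ring.
    have -> : 1 *: e1 + 1 *: e2 + 2 *: r3 = f2.
      apply: rv3_ext; rewrite /r3 !cE !cf eal ebe -eab a1; rewrite -e2a a1; ring.
    have -> : (-3) *: e1 + (-1) *: e2 + (-2) *: r3 = P3 e1 f2.
      apply: rv3_ext; rewrite /r3 /P3 !cE !cf eal ebe -eab a1; rewrite -e2a a1; ring.
    by [].
exfalso.
set y : lpt := 2 *: x1 + (-1 - 2 * m0) *: e1 + (-1 - 2 * n0) *: e2.
have hfy : f2 = a0 *: y.
  apply: rv3_ext; rewrite /y !cE !cf eal ebe -eab -e2a; ring.
have a0q : (a0%:~R : rat) != 0 by rewrite intr_eq0; apply/eqP => h; rewrite h in a2.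
have [M [M' hM]] : exists M M' : int, y = M *: e1 + M' *: f2.
  apply: lbF.2; exists 0, (1 / a0%:~R).
  rewrite hfy; apply: rv3_ext; rewrite !cE; field; exact: a0q.
have : (a0 * M) *: e1 + (a0 * M' - 1) *: f2 = 0.
  have -> : (a0 * M) *: e1 + (a0 * M' - 1) *: f2 = a0 *: (M *: e1 + M' *: f2) - f2.
    by apply: rv3_ext; rewrite !cE; ring.
  by rewrite -hM -hfy subrr.
move/(lb_indep lbF) => [_ h].
have hM1 : M' * a0 = 1 by lia.
have : a0 = 1 by apply: (unit_int hM1); lia.
lia.
Qed.

Theorem lemma4p13 (S : seq lpt) (e1 e2 f1 f2 : lpt) :
  minimal_fano S ->
  P112_triangle S e1 e2 ->
  P112_triangle S f1 f2 ->
  ~ (forall x : qpt, in_span2 e1 e2 x <-> in_span2 f1 f2 x) ->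
  exists A : 'M[int]_3, GL3Z A /\ (equiv_to S A M1 \/ equiv_to S A M2).
Proof.
move=> hm hE hF hn.
have hnzF := NZ hE.1 hF.1 hn.
have hnzE : ~ (dZ e1 e2 f1 = 0 /\ dZ e1 e2 f2 = 0).
  by apply: (NZ hF.1 hE.1) => h; apply: hn => x; split => /h.
have SH := shared hm hE hF hnzF; simpl in SH.
case: hE => [lbE [v1 [v2 v3]]]; case: hF => [lbF [w1 [w2 w3]]].
change (vertex S (P3 e1 e2)) in v3; change (vertex S (P3 f1 f2)) in w3.
have c1 := vin v1; have c2 := vin v2; have c3 := vin v3.
have d1 := vin w1; have d2 := vin w2; have d3 := vin w3.
have half : forall (p q r : lpt) (z : lpt), conv (polytope S) (toQ p) -> conv (polytope S) (toQ q) ->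
    conv (polytope S) (toQ r) ->
    toQ z = (1/2 : rat) *: toQ p + (1/4 : rat) *: toQ q + (1/4 : rat) *: toQ r ->
    conv (polytope S) (toQ z).
  move=> p q r z hp hq hr ->; apply: conv3 => //; lra.
case: SH => [[he|[he|he]]|[[he|[he|he]]|[he|[he|he]]]].
- subst f1; apply: (caseI hm lbE lbF v1 v2 v3 w2 w3).
  by apply/eqP => h; apply: hnzE; split => //; exact: dZ11.
- subst f2; exfalso.
  apply: (W (t1 := e1) (t2 := e2) (rho := P3 f1 e1) (x := f1) (z := - f1 - e1) hm w3 c1 c2 c3 d1).
  + apply: (half _ _ _ _ d3 c2 c3); rewrite /P3; apply: rv3_ext; rewrite !cE; by field.
  + by apply/eqP => h; apply: hnzE; split; [exact: h | exact: dZ11].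
  + by rewrite dZP3 dZ11 subr0.
  + by rewrite /dZ !cE; ring.
- exfalso.
  have hd : dZ e1 e2 f2 = -2 * dZ e1 e2 f1.
    have := dZ11 e1 e2; rewrite [X in dZ _ _ X]he dZP3 => h; lia.
  apply: (W (t1 := e1) (t2 := e2) (rho := f2) (x := f1) (z := - f1 - e1) hm w2 c1 c2 c3 d1).
  + apply: (half _ _ _ _ d2 c2 c3); rewrite /P3 he /P3; apply: rv3_ext; rewrite !cE; by field.
  + by apply/eqP => h; apply: hnzE; split => //; rewrite hd h mulr0.
  + exact: hd.
  + by rewrite /dZ !cE; ring.
- subst f1; exfalso.
  apply: (W (t1 := e2) (t2 := f2) (rho := P3 e1 e2) (x := e1) (z := - e1 - e2) hm v3 d1 d2 d3 c1).
  + apply: (half _ _ _ _ c3 d2 d3); rewrite /P3; apply: rv3_ext; rewrite !cE; by field.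
  + by apply/eqP => h; apply: hnzF; split; [exact: h | exact: dZ11].
  + by rewrite dZP3 dZ11 subr0.
  + by rewrite /dZ !cE; ring.
- subst f2; exfalso.
  apply: (W (t1 := f1) (t2 := e2) (rho := P3 e1 e2) (x := e1) (z := - e1 - e2 - f1) hm v3 d1 d2 d3 c1).
  + have -> : toQ (- e1 - e2 - f1) = (1/2 : rat) *: toQ (P3 e1 e2) + (1/2 : rat) *: toQ (P3 f1 e2) + 0 *: toQ e1.
      by rewrite /P3; apply: rv3_ext; rewrite !cE; by field.
    by apply: conv3 => //; lra.
  + by apply/eqP => h; apply: hnzF; split; [exact: h | exact: dZ22].
  + by rewrite dZP3 dZ22 subr0.
  + by rewrite /dZ !cE; ring.
- exfalso.
  have hd : dZ f1 f2 e2 = 0 by rewrite he dZP3 dZ11 dZ22; ring.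
  apply: (W (t1 := f1) (t2 := f2) (rho := P3 e1 e2) (x := e1) (z := - e1 - e2 - f1) hm v3 d1 d2 d3 c1).
  + have -> : toQ (- e1 - e2 - f1) = (1/2 : rat) *: toQ (P3 e1 e2) + (1/2 : rat) *: toQ f2 + 0 *: toQ e1.
      by rewrite he /P3; apply: rv3_ext; rewrite !cE; by field.
    by apply: conv3 => //; lra.
  + by apply/eqP => h; apply: hnzF; split; [exact: h | exact: hd].
  + by rewrite dZP3 hd subr0.
  + have -> : dZ f1 f2 (- e1 - e2 - f1) = - dZ f1 f2 e1 - dZ f1 f2 e2 by rewrite /dZ !cE; ring.
    by rewrite hd subr0.
- subst f1; exfalso.
  have hd : dZ (P3 e1 e2) f2 e2 = -2 * dZ (P3 e1 e2) f2 e1.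
    have := dZ11 (P3 e1 e2) f2; rewrite dZP3 => h; lia.
  apply: (W (t1 := P3 e1 e2) (t2 := f2) (rho := e2) (x := e1) (z := - e1 - P3 e1 e2) hm v2 d1 d2 d3 c1).
  + apply: (half _ _ _ _ c2 d2 d3); rewrite /P3; apply: rv3_ext; rewrite !cE; by field.
  + by apply/eqP => h; apply: hnzF; split; [exact: h | rewrite hd h mulr0].
  + exact: hd.
  + by rewrite /dZ /P3 !cE; ring.
- subst f2; exfalso.
  have hd : dZ f1 (P3 e1 e2) e2 = -2 * dZ f1 (P3 e1 e2) e1.
    have := dZ22 f1 (P3 e1 e2); rewrite dZP3 => h; lia.
  apply: (W (t1 := f1) (t2 := P3 e1 e2) (rho := e2) (x := e1) (z := - e1 - P3 e1 e2 - f1) hm v2 d1 d2 d3 c1).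
  + have -> : toQ (- e1 - P3 e1 e2 - f1) = (1/2 : rat) *: toQ e2 + (1/2 : rat) *: toQ (P3 f1 (P3 e1 e2)) + 0 *: toQ e1.
      by rewrite /P3; apply: rv3_ext; rewrite !cE; by field.
    by apply: conv3 => //; lra.
  + by apply/eqP => h; apply: hnzF; split; [exact: h | rewrite hd h mulr0].
  + exact: hd.
  + by rewrite /dZ /P3 !cE; ring.
- exfalso.
  have he2 : e2 = P3 e1 (P3 f1 f2).
    by rewrite -he /P3; apply: rv3_ext; rewrite !cE; ring.
  have hd : dZ f1 f2 e2 = -2 * dZ f1 f2 e1 by rewrite he2 dZP3 dZP3 dZ11 dZ22; ring.
  apply: (W (t1 := f1) (t2 := f2) (rho := e2) (x := e1) (z := - e1 - P3 f1 f2 - f1) hm v2 d1 d2 d3 c1).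
  + have -> : toQ (- e1 - P3 f1 f2 - f1) = (1/2 : rat) *: toQ e2 + (1/2 : rat) *: toQ f2 + 0 *: toQ e1.
      by rewrite he2 /P3; apply: rv3_ext; rewrite !cE; by field.
    by apply: conv3 => //; lra.
  + by apply/eqP => h; apply: hnzF; split; [exact: h | rewrite hd h mulr0].
  + exact: hd.
  + by rewrite /dZ /P3 !cE; ring.
Qed.
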